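(* Fix a point and real numbers $L_F\neq0$, $L_{FF}$, $L_{FG}$, $L_{GG}$ (values at that point of derivatives of a Lagrangian $L(F,G)$), and an antisymmetric tensor $F_{\mu\nu}$ with invariants $F=F^{\mu\nu}F_{\mu\nu}$, $G=F^{\mu\nu}\tilde F_{\mu\nu}$. Let $f_{\mu\nu}$ be antisymmetric and $k_\lambda$ a covector satisfying (C) $f_{\mu\nu}k_\lambda+f_{\nu\lambda}k_\mu+f_{\lambda\mu}k_\nu=0$, and (E) $L_F f^{\mu\nu}k_\nu+A\,F^{\mu\nu}k_\nu+B\,\tilde F^{\mu\nu}k_\nu=0$, where $\xi=F^{\alpha\beta}f_{\alpha\beta}$, $\zeta=\tilde F^{\alpha\beta}f_{\alpha\beta}$, $A=2(\xi L_{FF}+\zeta L_{FG})$, $B=2(\xi L_{FG}+\zeta L_{GG})$. Suppose $\xi\neq0$ and set $\Omega=\zeta/\xi$. Then: (a) $g_\Omega^{\mu\nu}k_\mu k_\nu=0$, where $$g_\Omega^{\mu\nu}=L_F\eta^{\mu\nu}-4\Big[(L_{FF}+\Omega L_{FG})F^{\mu}{}_{\lambda}F^{\lambda\nu}+(L_{FG}+\Omega L_{GG})F^{\mu}{}_{\lambda}\tilde F^{\lambda\nu}\Big];$$ (b) if moreover $\eta^{\mu\nu}k_\mu k_\nu\neq0$, then $\Omega^2\Omega_1+\Omega\,\Omega_2+\Omega_3=0$, where $\Omega_1=-L_FL_{FG}+2FL_{FG}L_{GG}+G(L_{GG}^2-L_{FG}^2)$, $\Omega_2=(L_F+2GL_{FG})(L_{GG}-L_{FF})+2F(L_{FF}L_{GG}+L_{FG}^2)$,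 $\Omega_3=L_FL_{FG}+2FL_{FF}L_{FG}+G(L_{FG}^2-L_{FF}^2)$.
   Context: Minkowski metric $\eta_{\mu\nu}=\mathrm{diag}(1,-1,-1,-1)$, indices raised/lowered with $\eta$, summation convention. The dual is $\tilde F_{\alpha\beta}=\tfrac12\eta_{\alpha\beta}{}^{\mu\nu}F_{\mu\nu}$ with $\eta_{\alpha\beta\mu\nu}$ the totally antisymmetric Levi-Civita tensor; with these conventions $\tilde F_{\mu\nu}F^{\nu\lambda}=-\tfrac14G\,\delta_\mu^\lambda$ and $\tilde F_{\mu\lambda}\tilde F^{\lambda\nu}-F_{\mu\lambda}F^{\lambda\nu}=\tfrac12F\,\delta_\mu^\nu$. Conditions (C),(E) are the jump conditions for the field equations $\partial_\nu(L_FF^{\mu\nu}+L_G\tilde F^{\mu\nu})=0$ across a wavefront where $\partial_\lambda F_{\mu\nu}$ jumps by $f_{\mu\nu}k_\lambda$. *)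

(* Defs.v *)
From mathcomp Require Import all_boot all_order all_algebra.
Set Implicit Arguments. Unset Strict Implicit. Unset Printing Implicit Defensive.
Import Order.TTheory GRing.Theory Num.Theory.
Local Open Scope ring_scope.

Section Minkowski.
Variable R : realFieldType.

(* Covariant (lower-index) 2-tensors and covectors; indices 0..3, 0 = time. *)
Definition tensor2 := 'I_4 -> 'I_4 -> R.
Definition covec := 'I_4 -> R.

(* diagonal entries of eta = diag(1,-1,-1,-1) (same for eta_{mu nu} and eta^{mu nu}) *)
Definition eta (i : 'I_4) : R := if (i == 0 :> nat) then 1 else -1.

Definition etaUp (i j : 'I_4) : R := if i == j then eta i else 0.

(* Levi-Civita symbol eta_{abcd} (lower indices), eta_{0123} = +1:
   the sign of prod_{i<j} (x_j - x_i), zero if two indices coincide. *)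
Definition levi (a b c d : 'I_4) : R :=
  let df (x y : 'I_4) : int := (y%:Z - x%:Z) in
  (Num.sg (df a b * df a c * df a d * df b c * df b d * df c d))%:~R.

Definition antisym (T : tensor2) : Prop := forall i j, T i j = - T j i.

Definition up (T : tensor2) : tensor2 := fun i j => eta i * eta j * T i j.

(* dual: ~T_{ab} = 1/2 eta_{ab}^{mu nu} T_{mu nu} = 1/2 sum eta_{ab mu nu} T^{mu nu} *)
Definition dual (T : tensor2) : tensor2 :=
  fun a b => 2^-1 * \sum_(m < 4) \sum_(n < 4) levi a b m n * up T m n.

Definition contr (S T : tensor2) : R :=
  \sum_(a < 4) \sum_(b < 4) up S a b * T a b.

Definition invFF (T : tensor2) : R := contr T T.
Definition invGG (T : tensor2) : R := contr T (dual T).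

Definition mixprod (T S : tensor2) (m n : 'I_4) : R :=
  \sum_(l < 4) (eta m * T m l) * up S l n.

Definition quad (Q : 'I_4 -> 'I_4 -> R) (k : covec) : R :=
  \sum_(m < 4) \sum_(n < 4) Q m n * k m * k n.

Definition condC (f : tensor2) (k : covec) : Prop :=
  forall m n l, f m n * k l + f n l * k m + f l m * k n = 0.

Definition xi (Fl f : tensor2) : R := contr Fl f.
Definition zeta (Fl f : tensor2) : R := contr (dual Fl) f.
Definition coefA (LFF LFG : R) (Fl f : tensor2) : R :=
  2 * (xi Fl f * LFF + zeta Fl f * LFG).
Definition coefB (LFG LGG : R) (Fl f : tensor2) : R :=
  2 * (xi Fl f * LFG + zeta Fl f * LGG).

Definition condE (LF LFF LFG LGG : R) (Fl f : tensor2) (k : covec) : Prop :=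
  forall m, \sum_(n < 4)
    (LF * up f m n + coefA LFF LFG Fl f * up Fl m n
     + coefB LFG LGG Fl f * up (dual Fl) m n) * k n = 0.

Definition gOmega (LF LFF LFG LGG Om : R) (Fl : tensor2) (m n : 'I_4) : R :=
  LF * etaUp m n
  - 4 * ((LFF + Om * LFG) * mixprod Fl Fl m n
         + (LFG + Om * LGG) * mixprod Fl (dual Fl) m n).

Definition Omega1 (LF LFF LFG LGG FF GG : R) : R :=
  - LF * LFG + 2 * FF * LFG * LGG + GG * (LGG ^+ 2 - LFG ^+ 2).
Definition Omega2 (LF LFF LFG LGG FF GG : R) : R :=
  (LF + 2 * GG * LFG) * (LGG - LFF) + 2 * FF * (LFF * LGG + LFG ^+ 2).
Definition Omega3 (LF LFF LFG LGG FF GG : R) : R :=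
  LF * LFG + 2 * FF * LFF * LFG + GG * (LFG ^+ 2 - LFF ^+ 2).

End Minkowski.

(* Main.v *)
Require Import Defs.
From mathcomp Require Import all_boot all_order all_algebra.
From mathcomp Require Import ring lra.
Import Order.TTheory GRing.Theory Num.Theory.
Local Open Scope ring_scope.
Definition i0 : 'I_4 := @Ordinal 4 0 isT.
Definition i1 : 'I_4 := @Ordinal 4 1 isT.
Definition i2 : 'I_4 := @Ordinal 4 2 isT.
Definition i3 : 'I_4 := @Ordinal 4 3 isT.

Definition inv4 (a b c d : nat) : nat :=
  (b < a)%N + (c < a)%N + (d < a)%N + (c < b)%N + (d < b)%N + (d < c)%N.
Definition lvZ (a b c d : nat) : int :=
  if uniq [:: a; b; c; d] then (if odd (inv4 a b c d) then -1 else 1) else 0.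
Definition lvR {R : numDomainType} (a b c d : nat) : R :=
  if uniq [:: a; b; c; d] then (if odd (inv4 a b c d) then -1 else 1) else 0.

Lemma levi_int (a b c d : 'I_4) :
  Num.sg (((b:nat)%:Z - (a:nat)%:Z) * ((c:nat)%:Z - (a:nat)%:Z) * ((d:nat)%:Z - (a:nat)%:Z)
   * ((c:nat)%:Z - (b:nat)%:Z) * ((d:nat)%:Z - (b:nat)%:Z) * ((d:nat)%:Z - (c:nat)%:Z))
  = lvZ a b c d.
Proof.
case: a => [[|[|[|[|a]]]] Ha] //; case: b => [[|[|[|[|b]]]] Hb] //;
case: c => [[|[|[|[|c]]]] Hc] //; case: d => [[|[|[|[|d]]]] Hd] //; vm_compute; reflexivity.
Qed.

Lemma leviE (R : realFieldType) (a b c d : 'I_4) : levi R a b c d = lvR a b c d.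
Proof.
rewrite /levi levi_int /lvZ /lvR; case: ifP => _; last by rewrite mulr0z.
by case: ifP => _; rewrite ?mulrN1z ?mulr1z.
Qed.

Lemma sum4 (R : realFieldType) (F : 'I_4 -> R) : \sum_(i < 4) F i = F i0 + F i1 + F i2 + F i3.
Proof.
rewrite !big_ord_recl big_ord0 addr0 !addrA.
by congr (_ + _ + _ + _); congr F; apply: val_inj.
Qed.

Section H.
Variable R : realFieldType.
Implicit Types (T S Fl f : tensor2 R) (k u : covec R) (LF LFF LFG LGG Om : R).

Lemma antiE {T} : antisym T ->
  (T i0 i0 = 0) * (T i1 i1 = 0) * (T i2 i2 = 0) * (T i3 i3 = 0) *
  (T i1 i0 = - T i0 i1) * (T i2 i0 = - T i0 i2) * (T i3 i0 = - T i0 i3) *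
  (T i2 i1 = - T i1 i2) * (T i3 i1 = - T i1 i3) * (T i3 i2 = - T i2 i3).
Proof.
move=> h; have z : forall i, T i i = 0 by move=> i; have := h i i; lra.
by rewrite !z !(h i1 i0) !(h i2 i0) !(h i3 i0) !(h i2 i1) !(h i3 i1) !(h i3 i2).
Qed.


Lemma dualE {T} : antisym T ->
  (dual T i0 i0 = 0) * (dual T i1 i1 = 0) * (dual T i2 i2 = 0) * (dual T i3 i3 = 0) *
  (dual T i0 i1 = T i2 i3) * (dual T i1 i0 = - T i2 i3) *
  (dual T i0 i2 = - T i1 i3) * (dual T i2 i0 = T i1 i3) *
  (dual T i0 i3 = T i1 i2) * (dual T i3 i0 = - T i1 i2) *
  (dual T i1 i2 = - T i0 i3) * (dual T i2 i1 = T i0 i3) *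
  (dual T i1 i3 = T i0 i2) * (dual T i3 i1 = - T i0 i2) *
  (dual T i2 i3 = - T i0 i1) * (dual T i3 i2 = T i0 i1).
Proof.
move=> h; rewrite /dual /up !sum4 !leviE /lvR /eta /= !(antiE h).
by do 15? split; field.
Qed.


Lemma etaE : (eta R i0 = 1) * (eta R i1 = -1) * (eta R i2 = -1) * (eta R i3 = -1).
Proof. by []. Qed.

Lemma etaUpE : (etaUp R i0 i0 = 1) * (etaUp R i1 i1 = -1) * (etaUp R i2 i2 = -1) * (etaUp R i3 i3 = -1)
 * (etaUp R i0 i1 = 0) * (etaUp R i0 i2 = 0) * (etaUp R i0 i3 = 0)
 * (etaUp R i1 i0 = 0) * (etaUp R i1 i2 = 0) * (etaUp R i1 i3 = 0)
 * (etaUp R i2 i0 = 0) * (etaUp R i2 i1 = 0) * (etaUp R i2 i3 = 0)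
 * (etaUp R i3 i0 = 0) * (etaUp R i3 i1 = 0) * (etaUp R i3 i2 = 0).
Proof. by []. Qed.

Lemma ord4 (i : 'I_4) : [\/ i = i0, i = i1, i = i2 | i = i3].
Proof.
case: i => [[|[|[|[|?]]]] Hi] //.
- by apply: Or41; apply: val_inj.
- by apply: Or42; apply: val_inj.
- by apply: Or43; apply: val_inj.
- by apply: Or44; apply: val_inj.
Qed.

Lemma anti_dual T : antisym T -> antisym (dual T).
Proof.
move=> h i j.
by case: (ord4 i) => ->; case: (ord4 j) => ->; rewrite !(dualE h) ?opprK ?oppr0.
Qed.

Definition lowU T k m : R := \sum_(l < 4) T m l * (eta R l * k l).
Definition dotU (u v : covec R) : R := \sum_(m < 4) eta R m * u m * v m.
Definition Cc T f k : R := \sum_(m < 4) \sum_(n < 4) \sum_(l < 4)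
   up T m n * (eta R l * k l) * (f m n * k l + f n l * k m + f l m * k n).
Definition Ew LF LFF LFG LGG Fl f k (u : covec R) : R := \sum_(m < 4) u m *
   \sum_(n < 4) (LF * up f m n + Defs.coefA LFF LFG Fl f * up Fl m n
     + Defs.coefB LFG LGG Fl f * up (dual Fl) m n) * k n.

Lemma I1 LF LFF LFG LGG Om T k : antisym T ->
  quad (gOmega LF LFF LFG LGG Om T) k =
  LF * quad (@etaUp R) k + 4 * ((LFF + Om * LFG) * dotU (lowU T k) (lowU T k)
     + (LFG + Om * LGG) * dotU (lowU T k) (lowU (dual T) k)).
Proof.
move=> hT.
rewrite /quad /gOmega /mixprod /dotU /lowU /up !sum4 !(dualE hT) !etaE !etaUpE !(antiE hT). ring.
Qed.

Lemma I2 T f k : antisym T -> antisym f ->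
  Cc T f k = contr T f * quad (@etaUp R) k - 2 * dotU (lowU T k) (lowU f k).
Proof.
move=> hT hf.
rewrite /Cc /contr /quad /dotU /lowU /up !sum4 !etaE !etaUpE !(antiE hT) !(antiE hf). ring.
Qed.

Lemma I3 LF LFF LFG LGG Fl f k u : antisym Fl -> antisym f ->
  Ew LF LFF LFG LGG Fl f k u = LF * dotU u (lowU f k)
    + Defs.coefA LFF LFG Fl f * dotU u (lowU Fl k) + Defs.coefB LFG LGG Fl f * dotU u (lowU (dual Fl) k).
Proof.
move=> hT hf.
rewrite /Ew /dotU /lowU /up !sum4 !(dualE hT) !etaE !(antiE hT) !(antiE hf). ring.
Qed.

Lemma I6 T k : antisym T ->
  dotU (lowU T k) (lowU (dual T) k) = invGG T / 4 * quad (@etaUp R) k.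
Proof.
move=> hT.
rewrite /invGG /contr /quad /dotU /lowU /up !sum4 !(dualE hT) !etaE !etaUpE !(antiE hT). by field. Qed.

Lemma I7 T k : antisym T ->
  dotU (lowU (dual T) k) (lowU (dual T) k) - dotU (lowU T k) (lowU T k)
   = - invFF T / 2 * quad (@etaUp R) k.
Proof.
move=> hT.
rewrite /invFF /contr /quad /dotU /lowU /up !sum4 !(dualE hT) !etaE !etaUpE !(antiE hT). by field.
Qed.

Lemma dotUC u v : dotU u v = dotU v u.
Proof. by apply: eq_bigr => m _; rewrite mulrAC. Qed.

Lemma alga LF LFF LFG LGG (x z Om K2 uu ut up : R) : z = Om * x -> x != 0 ->
  x * K2 - 2 * up = 0 ->
  LF * up + 2 * (x * LFF + z * LFG) * uu + 2 * (x * LFG + z * LGG) * ut = 0 ->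
  LF * K2 + 4 * ((LFF + Om * LFG) * uu + (LFG + Om * LGG) * ut) = 0.
Proof.
move=> hz hx hC hE.
have e : x * (LF * K2 + 4 * ((LFF + Om * LFG) * uu + (LFG + Om * LGG) * ut)) =
  2 * (LF * up + 2 * (x * LFF + z * LFG) * uu + 2 * (x * LFG + z * LGG) * ut)
  + LF * (x * K2 - 2 * up) by rewrite hz; ring.
move: e; rewrite hC hE !mulr0 addr0 => /eqP; rewrite mulf_eq0 (negbTE hx) /=.
by move/eqP.
Qed.

Lemma algb LF LFF LFG LGG (x z Om K2 FF GG uu ut tt up tp : R) : z = Om * x -> x != 0 -> K2 != 0 ->
  x * K2 - 2 * up = 0 -> z * K2 - 2 * tp = 0 ->
  LF * up + 2 * (x * LFF + z * LFG) * uu + 2 * (x * LFG + z * LGG) * ut = 0 ->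
  LF * tp + 2 * (x * LFF + z * LFG) * ut + 2 * (x * LFG + z * LGG) * tt = 0 ->
  ut - GG / 4 * K2 = 0 -> tt - uu + FF / 2 * K2 = 0 ->
  Om ^+ 2 * Omega1 LF LFF LFG LGG FF GG + Om * Omega2 LF LFF LFG LGG FF GG
   + Omega3 LF LFF LFG LGG FF GG = 0.
Proof.
move=> hz hx hK hC1 hC2 hE1 hE2 h6 h7.
set A := 2 * (x * LFF + z * LFG); set B := 2 * (x * LFG + z * LGG).
set g := Om ^+ 2 * _ + _ + _.
have e : K2 * (x ^+ 2 * g) =
  B * (LF * up + A * uu + B * ut) - A * (LF * tp + A * ut + B * tt)
  + (B * LF / 2) * (x * K2 - 2 * up) - (A * LF / 2) * (z * K2 - 2 * tp)
  - (B ^+ 2 - A ^+ 2) * (ut - GG / 4 * K2) + A * B * (tt - uu + FF / 2 * K2).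
  by rewrite /g /A /B hz /Omega1 /Omega2 /Omega3; field.
move: e; rewrite hE1 hE2 hC1 hC2 h6 h7 !mulr0 !subrr ?addr0 ?subr0 ?subrr ?addr0.
move/eqP; rewrite !mulf_eq0 (negbTE hK) (negbTE hx) /=.
by move/eqP.
Qed.
End H.
Arguments anti_dual {R T}.
Arguments Cc {R}. Arguments Ew {R}. Arguments lowU {R}. Arguments dotU {R}.
Arguments alga {R LF LFF LFG LGG x z Om K2 uu ut up}.
Arguments algb {R LF LFF LFG LGG x z Om K2 FF GG uu ut tt up tp}.

Theorem mainTheorem3 (R : realFieldType) (LF LFF LFG LGG : R)
    (Fl f : tensor2 R) (k : covec R) :
  LF != 0 ->
  antisym Fl -> antisym f ->
  condC f k ->
  condE LF LFF LFG LGG Fl f k ->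
  xi Fl f != 0 ->
  let Om := zeta Fl f / xi Fl f in
  quad (gOmega LF LFF LFG LGG Om Fl) k = 0 /\
  (quad (@etaUp R) k != 0 ->
   Om ^+ 2 * Omega1 LF LFF LFG LGG (invFF Fl) (invGG Fl)
   + Om * Omega2 LF LFF LFG LGG (invFF Fl) (invGG Fl)
   + Omega3 LF LFF LFG LGG (invFF Fl) (invGG Fl) = 0).
Proof.
move=> hLF hF hf hC hE hxi Om.
have hdF := anti_dual hF.
have hz : zeta Fl f = Om * xi Fl f by rewrite /Om divfK.
have C1 : Cc Fl f k = 0.
  by apply: big1 => m _; apply: big1 => n _; apply: big1 => l _; rewrite hC mulr0.
have C2 : Cc (dual Fl) f k = 0.
  by apply: big1 => m _; apply: big1 => n _; apply: big1 => l _; rewrite hC mulr0.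
have E1 : Ew LF LFF LFG LGG Fl f k (lowU Fl k) = 0.
  by apply: big1 => m _; rewrite (hE m) mulr0.
have E2 : Ew LF LFF LFG LGG Fl f k (lowU (dual Fl) k) = 0.
  by apply: big1 => m _; rewrite (hE m) mulr0.
rewrite I2 // in C1; rewrite I2 // in C2; rewrite I3 // in E1; rewrite I3 // in E2.
clearbody Om.
split.
  rewrite I1 //.
  exact: (alga hz hxi C1 E1).
move=> hK.
rewrite [dotU (lowU (dual Fl) k) (lowU Fl k)]dotUC in E2.
apply: (algb hz hxi hK C1 C2 E1 E2).
  by rewrite I6 // subrr.
by rewrite I7 // !mulNr addNr.
Qed.
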